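(* Let $n\ge 1$, let $G=P_n$ be the path with vertex set $\{1,\dots,n\}$ and edges $\{i,i+1\}$ for $1\le i<n$, and let $C\subseteq V(G)$ be such that no vertex of $V(G)\setminus C$ is isolated. Let $m_1=n-\delta_1+1$, where $\delta_1=\min_{v\in V(G)}|N\langle v\rangle|$. If $\{1,n\}\subseteq C$ or $C$ is a good configuration for $G$, then $\gamma_{\rm gr}(G;C)=m_1$; otherwise $\gamma_{\rm gr}(G;C)=m_1-1$.
   Context: $N\langle v\rangle = N[v]$ (closed neighborhood) if $v\in C$ and $N\langle v\rangle=N(v)$ (open neighborhood) if $v\notin C$. A sequence $(v_1,\dots,v_k)$ of distinct vertices is legal if $N\langle v_i\rangle\setminus\bigcup_{j<i}N\langle v_j\rangle\neq\emptyset$ for all $i\ge 2$, and dominating if $\bigcup_j N\langle v_j\rangle=V$; $\gamma_{\rm gr}(G;C)$ is the maximum length of a legal dominating sequence. Good configuration (defined for a path with vertices $a_1,\dots,a_n$ in order, applied to $C\cap\{a_1,\dots,a_n\}$; isolated vertices outside $C$ are allowed in this definition): $C$ is a good configuration for the path if (i) $n=1$ and $a_1\in C$; or (ii) $n=2$ and $\{a_1,a_2\}\not\subseteq C$; or (iii) $n\ge 3$ and either $a_1\notin C$ and $C$ is a good configuration for the subpath $(a_3,\dots,a_n)$, or $a_n\notin C$ and $C$ is a good configuration for the subpath $(a_1,\dots,a_{n-2})$. *)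

(* Defs.v *)
From mathcomp Require Import all_boot.
Set Implicit Arguments. Unset Strict Implicit. Unset Printing Implicit Defensive.

Section GrundyTotal.
Variable V : finType.
Variable adj : rel V.
Variable C : {set V}.

Definition open_nbhd (v : V) : {set V} := [set u | adj v u].
Definition closed_nbhd (v : V) : {set V} := v |: open_nbhd v.

Definition nbhdC (v : V) : {set V} :=
  if v \in C then closed_nbhd v else open_nbhd v.

Definition covered (s : seq V) : {set V} := \bigcup_(v <- s) nbhdC v.

Definition legal_seq (s : seq V) : Prop :=
  uniq s /\
  forall (i : nat) (x0 : V), 0 < i < size s ->
    nbhdC (nth x0 s i) :\: covered (take i s) != set0.

Definition dominating_seq (s : seq V) : Prop := covered s = [set: V].

Definition is_gamma_gr (k : nat) : Prop :=
  (exists s, legal_seq s /\ dominating_seq s /\ size s = k) /\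
  (forall s, legal_seq s -> dominating_seq s -> size s <= k).

Definition delta1 : nat := \big[minn/#|V|]_(v : V) #|nbhdC v|.

(* good configuration for a path with vertices a_1,...,a_n in order *)
Fixpoint good_aux (fuel : nat) (s : seq V) : bool :=
  match fuel with
  | 0 => false
  | fuel'.+1 =>
    match s with
    | [::] => false
    | [:: a] => a \in C
    | [:: a; b] => ~~ ((a \in C) && (b \in C))
    | a :: _ :: rest =>
        ((a \notin C) && good_aux fuel' rest) ||
        ((last a s \notin C) && good_aux fuel' (take (size s - 2) s))
    end
  end.

Definition good_config (s : seq V) : bool := good_aux (size s) s.

End GrundyTotal.

(* the path P_n on vertices 'I_n (vertex i+1 of the paper is i here) *)
Definition path_adj (n : nat) : rel 'I_n :=
  fun u v => ((val u).+1 == val v) || ((val v).+1 == val u).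

(* Main.v *)
Require Import Defs.
From mathcomp Require Import all_boot zify.
Set Implicit Arguments. Unset Strict Implicit. Unset Printing Implicit Defensive.

Section Abs.
Variable V : finType.

Fixpoint lg (F : V -> {set V}) (c : {set V}) (s : seq V) : bool :=
  if s is w :: s' then (F w :\: c != set0) && lg F (c :|: F w) s' else true.

Definition cov (F : V -> {set V}) (s : seq V) : {set V} := \bigcup_(v <- s) F v.

Lemma cov_cons F w s : cov F (w :: s) = F w :|: cov F s.
Proof. by rewrite /cov big_cons. Qed.

Lemma cov_nil F : cov F [::] = set0.
Proof. by rewrite /cov big_nil. Qed.

Lemma in_cov F x s : (x \in cov F s) = has (fun v => x \in F v) s.
Proof. elim: s => [|w s IH]; first by rewrite cov_nil in_set0.
by rewrite cov_cons in_setU IH. Qed.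

Lemma neq0P (A : {set V}) : reflect (exists x, x \in A) (A != set0).
Proof. by apply: (iffP (set0Pn A)). Qed.

Lemma lg_card (F : V -> {set V}) c s : lg F c s -> #|c| + size s <= #|c :|: cov F s|.
Proof.
elim: s c => [|w s IH] c /=; first by rewrite cov_nil setU0 addn0.
case/andP=> /neq0P [x]; rewrite in_setD => /andP [xc xF] /IH H.
rewrite cov_cons setUA.
have : #|c| < #|c :|: F w|.
  apply: proper_card; apply/properP; split; first exact: subsetUl.
  by exists x; rewrite ?in_setU ?xF ?orbT.
lia.
Qed.

Lemma lg_ext F G c s : (forall v, F v = G v) -> lg F c s = lg G c s.
Proof. move=> e; elim: s c => [|w s IH] c //=; by rewrite e IH. Qed.

Lemma lg_cat F c s1 s2 : lg F c (s1 ++ s2) = lg F c s1 && lg F (c :|: cov F s1) s2.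
Proof.
elim: s1 c => [|w s IH] c /=; first by rewrite cov_nil setU0.
by rewrite IH cov_cons setUA andbA.
Qed.

Lemma lg_transfer (F F' : V -> {set V}) (S : {set V}) c c' s :
  (forall v, F' v = F v :&: S) -> lg F' c' s -> c :&: S \subset c' -> lg F c s.
Proof.
move=> eF; elim: s c c' => [|w s IH] c c' //=.
case/andP=> /neq0P [x]; rewrite in_setD eF in_setI => /andP [xc /andP [xF xS]] H sub.
apply/andP; split.
  apply/neq0P; exists x; rewrite in_setD xF andbT.
  apply/negP => xc'; move/subsetP: sub => /(_ x); rewrite in_setI xc' xS => /(_ isT).
  by rewrite (negbTE xc).
apply: (IH _ _ H). rewrite setIUl. exact: setSU.
Qed.

Lemma lg_notcov (F : V -> {set V}) (e e' : V) c s : F e \subset [set e'] -> lg F c s -> e \in s -> e' \notin c.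
Proof.
move=> sub; elim: s c => [|w s IH] c //= /andP [H1 H2].
rewrite in_cons => /orP [/eqP ew|es].
  subst w; move/neq0P: H1 => [x]; rewrite in_setD => /andP [xc xF].
  by move/subsetP: sub => /(_ x xF); rewrite in_set1 => /eqP <-.
by move: (IH _ H2 es); rewrite in_setU negb_or => /andP [].
Qed.

Lemma lg_filter (F F' : V -> {set V}) (S : {set V}) e e' :
  (forall v, F' v = F v :&: S) ->
  e' \in F e -> F e \subset [set e'] ->
  (forall w, w \in S -> e \notin F w) ->
  (forall v x, x \in F v -> [|| x \in S, x == e | x == e']) ->
  e \notin S ->
  forall s (c c' : {set V}), lg F c s -> c' \subset c -> (e \in s \/ e' \in c) ->
  lg F' c' [seq x <- s | x \in S].
Proof.
move=> eF e'F Fe HS HF eS; elim=> [|w s IH] c c' //= /andP [H1 H2] sub inv.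
case: ifP => wS /=.
  apply/andP; split.
    move/neq0P: H1 => [x]; rewrite in_setD => /andP [xc xF].
    apply/neq0P; exists x; rewrite in_setD eF in_setI xF.
    have xe' : x != e'.
      apply/negP => /eqP xe; subst x.
      case: inv => [|e'c]; last by rewrite e'c in xc.
      rewrite in_cons => /orP [/eqP ew|es]; first by subst w; rewrite wS in eS.
      by move: (lg_notcov Fe H2 es); rewrite in_setU xF orbT.
    move: (HF _ _ xF) => /or3P [->| /eqP xe | /eqP xe].
    - rewrite !andbT; apply/negP => xc'; move/subsetP: sub => /(_ x xc') xc2; by rewrite xc2 in xc.
    - by subst x; move: (HS _ wS); rewrite xF.
    - by rewrite xe eqxx in xe'.
  apply: (IH _ _ H2).
    rewrite eF; apply: (subset_trans (setUS _ (subsetIl _ _))); exact: setSU.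
  case: inv => [|e'c]; last by right; rewrite in_setU e'c.
  rewrite in_cons => /orP [/eqP ew|es]; first by subst w; rewrite wS in eS.
  by left.
apply: (IH _ _ H2); first by apply: (subset_trans sub); exact: subsetUl.
case: inv => [|e'c]; last by right; rewrite in_setU e'c.
rewrite in_cons => /orP [/eqP ew|es]; last by left.
by subst w; right; rewrite in_setU e'F orbT.
Qed.

Lemma lg_step (F F' : V -> {set V}) (S : {set V}) (e e' : V) s :
  (forall v, F' v = F v :&: S) ->
  e' \in F e -> (forall x, x \in F e -> x \notin S) ->
  e \in F e' -> e \notin F e -> (forall u, u \in s -> e \notin F u) ->
  lg F' set0 s -> lg F set0 (e :: s ++ [:: e']).
Proof.
move=> eF e'F FeS eFe' eFe Hs H /=.
apply/andP; split; first by apply/neq0P; exists e'; rewrite setD0.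
rewrite lg_cat (lg_transfer eF H) /=; last first.
  apply/subsetP => x; rewrite set0U in_setI => /andP [xF xS].
  by rewrite (negbTE (FeS _ xF)) in xS.
rewrite andbT; apply/neq0P; exists e.
rewrite in_setD eFe' andbT set0U in_setU (negbTE eFe) /= in_cov.
by apply/hasPn => u /Hs.
Qed.

Lemma lg_count (F : V -> {set V}) w s (Seg : {set V}) :
  lg F set0 (w :: s) -> uniq (w :: s) -> (forall v, F v \subset Seg) ->
  #|Seg| <= size (w :: s) -> #|F w| <= 1.
Proof.
move=> /= /andP [_ H] _ sub cS.
move: (lg_card H); rewrite set0U.
have : #|F w :|: cov F s| <= #|Seg|.
  apply: subset_leq_card; apply/subsetP => x; rewrite in_setU in_cov => /orP [/(subsetP (sub _))//|].
  by case/hasP => u _ /(subsetP (sub _)).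
move: cS => /=; lia.
Qed.

End Abs.


Fixpoint goodN (P : pred nat) (fuel : nat) (s : seq nat) : bool :=
  match fuel with
  | 0 => false
  | fuel'.+1 =>
    match s with
    | [::] => false
    | [:: a] => P a
    | [:: a; b] => ~~ (P a && P b)
    | a :: _ :: rest =>
        (~~ P a && goodN P fuel' rest) ||
        (~~ P (last a s) && goodN P fuel' (take (size s - 2) s))
    end
  end.

Lemma good_map (V : finType) (C : {set V}) (P : pred nat) (f : V -> nat) :
  (forall v, P (f v) = (v \in C)) ->
  forall fuel s, good_aux C fuel s = goodN P fuel (map f s).
Proof.
move=> Pf; elim=> [|fu IH] s //.
case: s => [|a [|b [|c r]]] //=; rewrite ?Pf //.
by rewrite IH (last_map f) Pf IH /= size_map map_take.
Qed.

Lemma goodN3 P f a b c r : goodN P f.+1 [:: a, b, c & r] =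
  (~~ P a && goodN P f (c :: r)) ||
  (~~ P (last a [:: a, b, c & r]) && goodN P f (take (size r).+1 [:: a, b, c & r])).
Proof. by []. Qed.

Lemma goodN_fuel P f s : size s <= f -> goodN P f.+1 s = goodN P f s.
Proof.
elim: f s => [|f IH] s.
  by case: s.
case: s => [|a [|b [|c r]]] // H.
rewrite goodN3 [in RHS]goodN3 !IH //= ?size_take; try lia.
all: move: H => /=; rewrite ?size_take /=; try case: ifP; lia.
Qed.

Lemma goodN_fuel2 P k s : goodN P (size s + k) s = goodN P (size s) s.
Proof.
elim: k => [|k IH]; first by rewrite addn0.
by rewrite addnS goodN_fuel ?IH //; lia.
Qed.

Lemma last_iota l m : last l (iota l m.+1) = l + m.
Proof.
elim: m l => [|m IH] l /=; first by rewrite addn0.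
by move: (IH l.+1) => /= ->; rewrite addSnnS.
Qed.

Lemma goodN_iota P l m : 3 <= m ->
  goodN P m (iota l m) =
  (~~ P l && goodN P (m - 2) (iota (l + 2) (m - 2))) ||
  (~~ P (l + m - 1) && goodN P (m - 2) (iota l (m - 2))).
Proof.
case: m => [|[|[|k]]] // _.
have -> : k.+3 - 2 = k.+1 by lia.
have E : iota l k.+3 = [:: l, l.+1, l.+2 & iota l.+3 k] by [].
rewrite E goodN3 -E last_iota size_iota take_iota.
have E1 : l.+2 :: iota l.+3 k = iota (l + 2) k.+1 by rewrite addn2.
rewrite E1.
have -> : minn k.+1 k.+3 = k.+1 by lia.
have -> : l + k.+2 = l + k.+3 - 1 by lia.
by rewrite (goodN_fuel _ (s := iota (l + 2) k.+1)) ?size_iota // (goodN_fuel _ (s := iota l k.+1)) ?size_iota.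
Qed.


Ltac nlia := simpl in *; lia.

Section Path.
Variable n : nat.
Variable C : {set 'I_n}.

Notation N := (nbhdC (@path_adj n) C).

Lemma inN v x : (x \in N v) =
  ((v \in C) && (val x == val v)) || ((val v).+1 == val x) || ((val x).+1 == val v).
Proof.
rewrite /nbhdC /closed_nbhd /open_nbhd /path_adj.
case: (v \in C); rewrite ?in_setU1 in_set ?val_eqE /= ?orbA //.
Qed.

Definition Seg l m := [set x : 'I_n | l <= val x < l + m].
Definition FS l m v := N v :&: Seg l m.

Lemma inFS l m v x : (x \in FS l m v) =
  (((v \in C) && (val x == val v)) || ((val v).+1 == val x) || ((val x).+1 == val v))
  && (l <= val x < l + m).
Proof. by rewrite /FS in_setI inN in_set. Qed.

Lemma FS_sub l m k j v : l <= k -> k + j <= l + m ->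
  FS k j v = FS l m v :&: Seg k j.
Proof.
move=> H1 H2; apply/setP => x; rewrite in_setI !inFS in_set.
case: (_ || _); rewrite ?andbT //=; nlia.
Qed.

Definition spec l m s :=
  [/\ uniq s, forall x : 'I_n, (x \in s) = (l <= val x < l + m) & lg (FS l m) set0 s].

Definition Pn (k : nat) := [exists v : 'I_n, (val v == k) && (v \in C)].

Lemma PnE v : Pn (val v) = (v \in C).
Proof.
apply/existsP/idP => [[u /andP [/eqP /val_inj -> //]]|vC].
by exists v; rewrite eqxx vC.
Qed.

Lemma PnO k (H : k < n) : Pn k = (Ordinal H \in C).
Proof. by rewrite -PnE. Qed.

Lemma card_seg l m s : uniq s -> (forall x : 'I_n, (x \in s) = (l <= val x < l + m)) ->
  #|Seg l m| <= size s.
Proof.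
move=> us mems; rewrite -(card_uniqP us); apply: subset_leq_card.
by apply/subsetP => x; rewrite in_set mems.
Qed.

Lemma two_elems l m v : 2 <= m -> l + m <= n ->
  Pn l -> Pn (l + m - 1) -> v \in Seg l m -> 1 < #|FS l m v|.
Proof.
move=> m2 lmn Pl Pr; rewrite in_set => /andP [v1 v2].
apply/card_gt1P.
have [vl|vl] := eqVneq (val v) l.
  have vC : v \in C by rewrite -PnE vl.
  have H : l.+1 < n by nlia.
  exists v, (Ordinal H); rewrite !inFS /= vC eqxx -val_eqE /=; split; nlia.
have [vr|vr] := eqVneq (val v) (l + m - 1).
  have vC : v \in C by rewrite -PnE vr.
  have H : l + m - 2 < n by nlia.
  exists v, (Ordinal H); rewrite !inFS /= vC eqxx -val_eqE /=; split; nlia.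
have H1 : (val v).-1 < n by nlia.
have H2 : (val v).+1 < n by nlia.
exists (Ordinal H1), (Ordinal H2); rewrite !inFS -val_eqE /=; split; case: (v \in C); nlia.
Qed.

Lemma destruct_good m : forall l s, 0 < m -> l + m <= n -> spec l m s -> goodN Pn m (iota l m).
Proof.
elim/ltn_ind: m => m IH l s m0 lmn [us mems lgs].
have Hl : l < n by nlia.
set e := Ordinal Hl.
have es : e \in s by rewrite mems /=; nlia.
case: s us mems lgs es => [//|w s'] us mems lgs _.
have wS : l <= val w < l + m by rewrite -mems mem_head.
have [m1|m1] := eqVneq m 1.
  subst m; rewrite /=.
  move: lgs => /= /andP [/neq0P [x]]; rewrite in_setD in_set0 inFS /= => + _.
  have [wC|wC] := boolP (w \in C); last by nlia.
  move=> _; have := PnE w; have -> : val w = l by nlia. by rewrite wC.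
have Hr : l + m - 1 < n by nlia.
set r := Ordinal Hr.
have [bothC|nboth] := boolP (Pn l && Pn (l + m - 1)).
  case/andP: bothC => Pl Pr.
  have := lg_count lgs us (fun v => subsetIr (N v) (Seg l m)) (card_seg us mems).
  have := two_elems (v := w) _ lmn Pl Pr; rewrite in_set wS.
  have m2 : 1 < m by nlia.
  move=> /(_ m2 isT).
  nlia.
have [m2|m2] := eqVneq m 2.
  by subst m; move: nboth; rewrite /= addn2 subn1.
rewrite goodN_iota; last by nlia.
move: nboth; rewrite negb_and => /orP [Pl|Pr].
  have eC : e \notin C by rewrite -PnE.
  have Hl1 : l.+1 < n by nlia.
  set e' := Ordinal Hl1.
  have lgf : lg (FS (l + 2) (m - 2)) set0 [seq x <- w :: s' | x \in Seg (l + 2) (m - 2)].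
    apply: (@lg_filter _ (FS l m) (FS (l + 2) (m - 2)) (Seg (l + 2) (m - 2)) e e' _ _ _ _ _ _ (w :: s') set0 set0 lgs (sub0set _)).
    - by move=> v; apply: FS_sub; nlia.
    - by rewrite inFS /=; nlia.
    - by apply/subsetP => x; rewrite inFS in_set1 -val_eqE /= (negbTE eC); nlia.
    - by move=> u; rewrite in_set inFS /=; case: (u \in C); nlia.
    - by move=> v x; rewrite inFS in_set -!val_eqE /=; case: (v \in C); nlia.
    - by rewrite in_set /=; nlia.
    - by left; rewrite mems /=; nlia.
  have MEM : forall x : 'I_n, (x \in [seq x <- w :: s' | x \in Seg (l + 2) (m - 2)]) = (l + 2 <= val x < l + 2 + (m - 2)).
    by move=> x; rewrite mem_filter mems in_set; nlia.
  have G := IH (m - 2) ltac:(nlia) (l + 2) _ ltac:(nlia) ltac:(nlia) (And3 (filter_uniq _ us) MEM lgf).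
  by rewrite Pl G.
have rC : r \notin C by rewrite -PnE.
have Hr1 : l + m - 2 < n by nlia.
set r' := Ordinal Hr1.
have lgf : lg (FS l (m - 2)) set0 [seq x <- w :: s' | x \in Seg l (m - 2)].
  apply: (@lg_filter _ (FS l m) (FS l (m - 2)) (Seg l (m - 2)) r r' _ _ _ _ _ _ (w :: s') set0 set0 lgs (sub0set _)).
  - by move=> v; apply: FS_sub; nlia.
  - by rewrite inFS /=; nlia.
  - by apply/subsetP => x; rewrite inFS in_set1 -val_eqE /= (negbTE rC); nlia.
  - by move=> u; rewrite in_set inFS /=; case: (u \in C); nlia.
  - by move=> v x; rewrite inFS in_set -!val_eqE /=; case: (v \in C); nlia.
  - by rewrite in_set /=; nlia.
  - by left; rewrite mems /=; nlia.
have MEM : forall x : 'I_n, (x \in [seq x <- w :: s' | x \in Seg l (m - 2)]) = (l <= val x < l + (m - 2)).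
  by move=> x; rewrite mem_filter mems in_set; nlia.
have G := IH (m - 2) ltac:(nlia) l _ ltac:(nlia) ltac:(nlia) (And3 (filter_uniq _ us) MEM lgf).
by rewrite Pr G orbT.
Qed.

Lemma step_left l m s' (Hl : l < n) (Hl1 : l.+1 < n) : 2 <= m -> l + m <= n ->
  ~~ Pn l -> spec (l + 2) (m - 2) s' ->
  spec l m (Ordinal Hl :: s' ++ [:: Ordinal Hl1]).
Proof.
move=> m2 lmn Pl [us mems lgs].
have eC : Ordinal Hl \notin C by rewrite -PnE.
split.
- rewrite cons_uniq mem_cat mem_seq1 cat_uniq us /= mems -val_eqE /= orbF andbT.
  apply/andP; split; first by nlia.
  by rewrite mems /=; nlia.
- by move=> x; rewrite in_cons mem_cat mem_seq1 mems -!val_eqE /=; nlia.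
apply: (lg_step (S := Seg (l + 2) (m - 2)) (F' := FS (l + 2) (m - 2))) => //.
- by move=> v; apply: FS_sub; nlia.
- by rewrite inFS /=; nlia.
- by move=> x; rewrite inFS in_set /= (negbTE eC); nlia.
- by rewrite inFS /=; nlia.
- by rewrite inFS /= (negbTE eC); nlia.
- move=> u; rewrite mems inFS /= => H; case: (u \in C); nlia.
Qed.

Lemma step_right l m s' (Hr : l + m - 1 < n) (Hr1 : l + m - 2 < n) : 2 <= m -> l + m <= n ->
  ~~ Pn (l + m - 1) -> spec l (m - 2) s' ->
  spec l m (Ordinal Hr :: s' ++ [:: Ordinal Hr1]).
Proof.
move=> m2 lmn Pr [us mems lgs].
have eC : Ordinal Hr \notin C by rewrite -PnE.
split.
- rewrite cons_uniq mem_cat mem_seq1 cat_uniq us /= mems -val_eqE /= orbF andbT.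
  apply/andP; split; first by nlia.
  by rewrite mems /=; nlia.
- by move=> x; rewrite in_cons mem_cat mem_seq1 mems -!val_eqE /=; nlia.
apply: (lg_step (S := Seg l (m - 2)) (F' := FS l (m - 2))) => //.
- by move=> v; apply: FS_sub; nlia.
- by rewrite inFS /=; nlia.
- by move=> x; rewrite inFS in_set /= (negbTE eC); nlia.
- by rewrite inFS /=; nlia.
- by rewrite inFS /= (negbTE eC); nlia.
- move=> u; rewrite mems inFS /= => H; case: (u \in C); nlia.
Qed.

Lemma spec_nil l : spec l 0 [::].
Proof. by split => // x; rewrite in_nil; nlia. Qed.

Lemma construct_good m : forall l, 0 < m -> l + m <= n -> goodN Pn m (iota l m) ->
  exists s, spec l m s.
Proof.
elim/ltn_ind: m => m IH l m0 lmn.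
have Hl : l < n by nlia.
have [m1|m1] := eqVneq m 1.
  subst m => /= Pl.
  have eC : Ordinal Hl \in C by rewrite -PnE.
  exists [:: Ordinal Hl]; split => //.
    by move=> x; rewrite mem_seq1 -val_eqE /=; nlia.
  rewrite /= andbT; apply/neq0P; exists (Ordinal Hl).
  by rewrite in_setD in_set0 inFS /= eC eqxx /=; nlia.
have [m2|m2] := eqVneq m 2.
  subst m => /=; rewrite negb_and => /orP [Pl|Pr].
    have Hl1 : l.+1 < n by nlia.
    exists (Ordinal Hl :: [::] ++ [:: Ordinal Hl1]).
    apply: step_left => //; exact: spec_nil.
  have Hr : l + 2 - 1 < n by nlia.
  have Hr1 : l + 2 - 2 < n by nlia.
  exists (Ordinal Hr :: [::] ++ [:: Ordinal Hr1]).
  apply: step_right => //.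
    by have -> : l + 2 - 1 = l.+1 by nlia.
  exact: spec_nil.
rewrite goodN_iota; last by nlia.
case/orP => [/andP [Pl G]|/andP [Pr G]].
  have [s' H] := IH (m - 2) ltac:(nlia) (l + 2) ltac:(nlia) ltac:(nlia) G.
  have Hl1 : l.+1 < n by nlia.
  exists (Ordinal Hl :: s' ++ [:: Ordinal Hl1]).
  by apply: step_left => //; nlia.
have [s' H] := IH (m - 2) ltac:(nlia) l ltac:(nlia) ltac:(nlia) G.
have Hr : l + m - 1 < n by nlia.
have Hr1 : l + m - 2 < n by nlia.
exists (Ordinal Hr :: s' ++ [:: Ordinal Hr1]).
by apply: step_right => //; nlia.
Qed.

End Path.


Lemma lgP (V : finType) (F : V -> {set V}) c s : lg F c s <->
  (forall i x0, i < size s -> F (nth x0 s i) :\: (c :|: cov F (take i s)) != set0).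
Proof.
elim: s c => [|w s IH] c /=; first by split => // _ i x0.
split.
- case/andP => H1 /IH H2 [|i] x0 /= Hi; first by rewrite ?take0 cov_nil setU0.
  by rewrite cov_cons setUA; apply: H2.
- move=> H; apply/andP; split.
  + by have := H 0 w isT; rewrite ?take0 cov_nil setU0.
  + apply/IH => i x0 Hi; have := H i.+1 x0 Hi; by rewrite /= cov_cons setUA.
Qed.

Lemma big_minn_le (I : finType) x (F : I -> nat) j : \big[minn/x]_(i : I) F i <= F j.
Proof.
have : j \in index_enum I by rewrite mem_index_enum.
elim: (index_enum I) => [|a r IH] //=; rewrite big_cons in_cons => /orP [/eqP <-| jr].
  exact: geq_minl.
exact: leq_trans (geq_minr _ _) (IH jr).
Qed.

Lemma big_minn_ge (I : finType) x (F : I -> nat) k :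
  k <= x -> (forall i, k <= F i) -> k <= \big[minn/x]_(i : I) F i.
Proof.
move=> kx kF; apply: (big_ind (fun y => k <= y)) => // a b ka kb.
by rewrite leq_min ka kb.
Qed.

Section Top.
Variable n : nat.
Variable C : {set 'I_n}.
Notation N := (nbhdC (@path_adj n) C).

Lemma covE s : covered (@path_adj n) C s = cov N s.
Proof. by []. Qed.

Lemma legal_lg s : (forall v, N v != set0) ->
  legal_seq (@path_adj n) C s <-> uniq s /\ lg N set0 s.
Proof.
move=> Nne; rewrite /legal_seq.
case: s => [|w s] /=.
  by split => [[]|[]] //; split => // i x0; rewrite ltn0 andbF.
split.
- case=> us H; split => //; apply/andP; split; first by rewrite setD0 Nne.
  apply/lgP => i x0 Hi; have /(_ Hi) := H i.+1 x0.
  by rewrite /= covE cov_cons set0U.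
- case=> us /andP [_ /lgP H]; split => // [[|i]] x0 Hi; first lia.
  by have := H i x0 Hi; rewrite /= covE cov_cons set0U.
Qed.

Lemma upper s : (forall v, N v != set0) -> legal_seq (@path_adj n) C s ->
  size s <= n - delta1 (@path_adj n) C + 1.
Proof.
move=> Nne /(legal_lg _ Nne) [us H0]; case: s us H0 => [|w s] us //= /andP [_ H].
have := lg_card H.
have : #|set0 :|: N w :|: cov N s| <= n by apply: leq_trans (max_card _) _; rewrite card_ord.
have : delta1 (@path_adj n) C <= #|N w| by apply: big_minn_le.
rewrite set0U => h1 h2 h3; have h4 := leq_trans h3 h2; nlia.
Qed.

Lemma full_size s : uniq s -> (forall x : 'I_n, x \in s) -> size s = n.
Proof.
move=> us all; rewrite -(card_uniqP us); apply: (@etrans _ _ (#|{: 'I_n}|)); last exact: card_ord.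
by apply: eq_card => x; rewrite all.
Qed.

Lemma size_full s : uniq s -> size s = n -> forall x : 'I_n, x \in s.
Proof.
move=> us sz x; apply/negPn/negP => xs.
have : #|s| <= #|[set~ x]|.
  apply: subset_leq_card; apply/subsetP => y ys; rewrite !inE.
  by apply/eqP => yx; subst y; rewrite ys in xs.
move: (ltn_ord x); by rewrite cardsC1 card_ord (card_uniqP us) sz; nlia.
Qed.

Lemma dom_of_lg s : lg N set0 s -> size s = n -> dominating_seq (@path_adj n) C s.
Proof.
move=> H sz; have := lg_card H; rewrite cards0 set0U add0n sz => H2.
rewrite /dominating_seq covE; apply/eqP; rewrite eqEcard subsetT cardsT card_ord.
exact: H2.
Qed.

Lemma FS0 v : FS C 0 n v = N v.
Proof. apply/setP => x; rewrite inFS inN add0n /=; case: (_ || _) => //=; exact: ltn_ord. Qed.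

Lemma lg_iota j : forall k (c : {set 'I_n}), k + j <= n.-1 -> (forall x : 'I_n, x \in c -> val x <= k) ->
  lg N c (pmap insub (iota k j)).
Proof.
elim: j => [|j IH] k c // H Hc.
rewrite /=; case: insubP => [u _ uk|]; last by lia.
have Hk1 : k.+1 < n by lia.
apply/andP; split.
  apply/neq0P; exists (Ordinal Hk1); rewrite in_setD inN /= uk eqxx orbT andbT.
  by apply/negP => /Hc /=; lia.
apply: IH; first by lia.
move=> x; rewrite in_setU => /orP [/Hc|]; first by lia.
rewrite inN uk; case: (u \in C) => /=; lia.
Qed.

End Top.


Theorem proposition3 (n : nat) (hn : 1 <= n) (C : {set 'I_n})
  (hC : forall v : 'I_n, v \notin C -> open_nbhd (@path_adj n) v != set0) :
  let m1 := n - delta1 (@path_adj n) C + 1 in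
  if [forall v : 'I_n, ((val v == 0) || (val v == n.-1)) ==> (v \in C)]
     || good_config C (enum 'I_n)
  then is_gamma_gr (@path_adj n) C m1
  else is_gamma_gr (@path_adj n) C (m1 - 1).
Proof.
move=> m1.
pose N := nbhdC (@path_adj n) C.
have Nne : forall v, N v != set0.
  move=> v; have [vC|vC] := boolP (v \in C).
    by apply/neq0P; exists v; rewrite inN vC eqxx.
  by rewrite /N /nbhdC (negbTE vC); apply: hC.
have UB : forall s, legal_seq (@path_adj n) C s -> size s <= m1.
  by move=> s; apply: upper.
have GE : good_config C (enum 'I_n) = goodN (Pn C) n (iota 0 n).
  rewrite /good_config (good_map (P := Pn C) (f := val)); last exact: PnE.
  by rewrite val_enum_ord size_enum_ord.
have dge1 : 1 <= delta1 (@path_adj n) C.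
  apply: big_minn_ge; rewrite ?card_ord // => v; rewrite card_gt0; exact: Nne.
have H0 : 0 < n by [].
pose e0 := Ordinal H0.
pose s0 := pmap (insub : nat -> option 'I_n) (iota 0 n.-1).
have s0u : uniq s0 by apply: pmap_sub_uniq; apply: iota_uniq.
have s0m : forall x : 'I_n, (x \in s0) = (val x < n.-1).
  by move=> x; rewrite mem_pmap_sub mem_iota; nlia.
have s0size : size s0 = n.-1.
  rewrite size_pmap_sub (eq_in_count (a2 := predT)) ?count_predT ?size_iota //.
  by move=> k; rewrite mem_iota /=; nlia.
have s0lg : lg N set0 s0 by apply: lg_iota => // x; rewrite in_set0.
have s0legal : legal_seq (@path_adj n) C s0 by apply/legal_lg.
have s0dom : 1 < n -> (2 < n \/ e0 \in C) -> dominating_seq (@path_adj n) C s0.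
  move=> n2 H; rewrite /dominating_seq covE; apply/setP => x; rewrite in_setT in_cov.
  have [x0|x0] := eqVneq (val x) 0.
    case: H => [n3|e0C].
      have H1 : 1 < n by nlia.
      apply/hasP; exists (Ordinal H1); first by rewrite s0m /=; nlia.
      by rewrite inN /=; nlia.
    apply/hasP; exists x; first by rewrite s0m; nlia.
    have -> : x = e0 by apply: val_inj => /=; nlia.
    by rewrite inN e0C eqxx.
  have H1 : (val x).-1 < n by move: (ltn_ord x); nlia.
  apply/hasP; exists (Ordinal H1); first by rewrite s0m /=; move: (ltn_ord x); nlia.
  by rewrite inN /=; nlia.
have [FA|nFA] := boolP [forall v : 'I_n, ((val v == 0) || (val v == n.-1)) ==> (v \in C)].
  rewrite /=.
  have e0C : e0 \in C by move/forallP: FA => /(_ e0) /=.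
  have [n1|n2] := eqVneq n 1.
    have dl : delta1 (@path_adj n) C = 1.
      apply/eqP; rewrite eqn_leq dge1 andbT.
      apply: leq_trans (big_minn_le _ _ e0) _.
      by rewrite -n1 -[X in _ <= X]card_ord max_card.
    split.
      exists [:: e0]; split; [|split]; last by rewrite /m1 dl; nlia.
        by split => // i x0 /=; nlia.
      rewrite /dominating_seq covE cov_cons cov_nil setU0; apply/setP => x.
      rewrite in_setT inN e0C /=; apply/orP; left; apply/orP; left; apply/eqP.
      by move: (ltn_ord x); nlia.
    by move=> s /UB.
  have n2' : 1 < n by nlia.
  have Hr : n.-1 < n by nlia.
  have rC : Ordinal Hr \in C by move/forallP: FA => /(_ (Ordinal Hr)) /=; rewrite eqxx orbT.
  have dl : delta1 (@path_adj n) C = 2.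
    apply/eqP; rewrite eqn_leq; apply/andP; split.
      apply: leq_trans (big_minn_le _ _ e0) _.
      have H1 : 1 < n by nlia.
      apply: leq_trans (subset_leq_card (_ : N e0 \subset [set e0; Ordinal H1])) _.
        by apply/subsetP => x; rewrite inN in_set2 -!val_eqE /=; nlia.
      by rewrite cards2.
    apply: big_minn_ge => [|v]; first by rewrite card_ord.
    have T : 1 < #|FS C 0 n v|.
      apply: (two_elems (l := 0) (m := n)) => //.
      - by rewrite (PnO C H0).
      - have -> : 0 + n - 1 = n.-1 by nlia.
        by rewrite (PnO C Hr).
      - by rewrite in_set add0n leq0n /=.
    exact: leq_trans T (subset_leq_card (subsetIl _ _)).
  split; last by move=> s /UB.
  exists s0; do 2?split => //; first by apply: s0dom; [nlia | right].
  by rewrite s0size /m1 dl; nlia.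
rewrite /=.
move: nFA; rewrite negb_forall => /existsP [v0]; rewrite negb_imply => /andP [v0e v0C].
have n2 : 1 < n.
  case: (ltnP 1 n) => // n1.
  have /neq0P [x] := hC _ v0C; rewrite in_set /path_adj.
  move: (ltn_ord x) (ltn_ord v0); nlia.
have dl : delta1 (@path_adj n) C = 1.
  apply/eqP; rewrite eqn_leq dge1 andbT.
  apply: leq_trans (big_minn_le _ _ v0) _.
  apply/card_le1_eqP => x y; rewrite !inN (negbTE v0C) /= => Hx Hy.
  apply: val_inj; move: (ltn_ord x) (ltn_ord y) (ltn_ord v0); nlia.
rewrite GE; case: ifP => Hg.
  have [s [us mems lgs]] := construct_good (l := 0) (m := n) H0 (leqnn _) Hg.
  have all : forall x : 'I_n, x \in s.
    by move=> x; rewrite mems; exact: (ltn_ord x).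
  have lgN : lg N set0 s by rewrite -(lg_ext _ _ (FS0 C)).
  split; last by move=> s' /UB.
  exists s; split; [|split]; first by apply/legal_lg.
    by apply: dom_of_lg => //; apply: full_size.
  by rewrite (full_size us all) /m1 dl; nlia.
split.
  exists s0; do 2?split => //.
    apply: s0dom => //.
    case: (ltnP 2 n) => [|n3]; first by left.
    right; apply/negPn/negP => e0C.
    have n2e : n = 2 by nlia.
    have good2 : forall P m, m = 2 -> goodN P m [:: 0; 1] = ~~ (P 0 && P 1) by move=> P m ->.
    move: Hg; rewrite (_ : iota 0 n = [:: 0; 1]); last by rewrite n2e.
    rewrite (good2 _ _ n2e) -[0]/(val e0) PnE (negbTE e0C) /=.
    done.
  by rewrite s0size /m1 dl; nlia.
move=> s Hl Hd.
have := UB s Hl; rewrite /m1 dl => H.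
case: (ltnP (size s) n) => [|Hs]; first by nlia.
have [us lgs] := (legal_lg _ Nne).1 Hl.
have sn : size s = n by nlia.
have all := size_full us sn.
have : goodN (Pn C) n (iota 0 n).
  apply: (destruct_good (l := 0) (m := n) (s := s) H0 (leqnn _)); split => //.
    by move=> x; rewrite all; apply/esym; exact: (ltn_ord x).
  by rewrite (lg_ext _ _ (FS0 C)).
by rewrite Hg.
Qed.
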